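(* Let $B$ be a ring, $\phi\in\operatorname{Aut}B$, $\delta:=\phi-\mathrm{id}$, and $\operatorname{pl}(\phi):=\delta(B)\cap B^{\phi}$. (i) If $a\in\operatorname{pl}(\phi)$ is not a zero-divisor of $B$ and $\delta(B)\subset aB$, then $\operatorname{pl}(\phi)=aB^{\phi}$. (ii) Suppose $B$ is a UFD and $\operatorname{pl}(\phi)$ is a principal ideal of $B^{\phi}$. If $a,b\in\operatorname{pl}(\phi)\setminus\{0\}$ and a greatest common divisor $c$ of $a$ and $b$ lies in $B^{\phi}$, then $c\in\operatorname{pl}(\phi)$.
   Context: $B^{\phi}:=\{u\in B\mid\phi(u)=u\}$; $\operatorname{pl}(\phi)$ is an ideal of $B^{\phi}$ (the plinth ideal). *)

(* Defs.v *)
(* Commutative rings (paper's convention: "ring" = commutative ring with 1). *)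
From HB Require Import structures.
From mathcomp Require Import all_boot all_order all_algebra.
Set Implicit Arguments. Unset Strict Implicit. Unset Printing Implicit Defensive.
Import GRing.Theory.
Local Open Scope ring_scope.

Definition rdvd (R : comPzRingType) (x y : R) : Prop := exists z : R, y = x * z.

Definition is_ring_aut (R : comPzRingType) (phi : {rmorphism R -> R}) : Prop :=
  bijective phi.

Definition fixed_ring (R : comPzRingType) (phi : R -> R) (u : R) : Prop := phi u = u.

Definition delta_image (R : comPzRingType) (phi : R -> R) (u : R) : Prop :=
  exists x : R, u = phi x - x.

Definition plinth (R : comPzRingType) (phi : R -> R) (u : R) : Prop :=
  delta_image phi u /\ fixed_ring phi u.

Definition non_zero_divisor (R : comPzRingType) (a : R) : Prop :=
  forall x : R, a * x = 0 -> x = 0.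

Definition is_gcd (R : comPzRingType) (a b c : R) : Prop :=
  [/\ rdvd c a, rdvd c b & forall d : R, rdvd d a -> rdvd d b -> rdvd d c].

Definition irreducible_elt (R : idomainType) (p : R) : Prop :=
  [/\ p != 0, p \isn't a GRing.unit &
      forall x y : R, p = x * y -> x \is a GRing.unit \/ y \is a GRing.unit].

Definition prime_elt (R : idomainType) (p : R) : Prop :=
  [/\ p != 0, p \isn't a GRing.unit &
      forall x y : R, rdvd p (x * y) -> rdvd p x \/ rdvd p y].

Definition is_UFD (R : idomainType) : Prop :=
  (forall x : R, x != 0 -> x \isn't a GRing.unit ->
     exists s : seq R, (forall p, p \in s -> irreducible_elt p) /\ x = \prod_(p <- s) p)
  /\ (forall p : R, irreducible_elt p -> prime_elt p).

(* Main.v *)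
Require Import Defs.
From HB Require Import structures.
From mathcomp Require Import all_boot all_order all_algebra.
Import GRing.Theory.
Local Open Scope ring_scope.

Theorem lemma2p6 :
  (* (i) *)
  (forall (B : comPzRingType) (phi : {rmorphism B -> B}) (a : B),
     is_ring_aut phi ->
     plinth phi a ->
     non_zero_divisor a ->
     (forall x : B, rdvd a (phi x - x)) ->
     forall u : B, plinth phi u <-> exists2 y : B, fixed_ring phi y & u = a * y)
  /\
  (* (ii) *)
  (forall (B : idomainType) (phi : {rmorphism B -> B}),
     is_ring_aut phi ->
     is_UFD B ->
     (exists2 g : B, fixed_ring phi g &
        forall u : B, plinth phi u <-> exists2 y : B, fixed_ring phi y & u = g * y) ->
     forall a b c : B,
       plinth phi a -> a != 0 ->
       plinth phi b -> b != 0 ->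
       is_gcd a b c -> fixed_ring phi c ->
       plinth phi c).
Proof.
split.
- move=> B phi a _ [[x0 Hx0] Ha] nzd Hdvd u; split.
  + case=> [[x Hx] Hu]. have [y Hy] := Hdvd x. exists y; last by rewrite Hx Hy.
    rewrite /fixed_ring. apply/eqP; rewrite -subr_eq0; apply/eqP; apply: nzd.
    have h : phi (a * y) = a * y by rewrite -Hy -Hx.
    move: h; rewrite rmorphM Ha => h.
    by rewrite mulrBr h subrr.
  + case=> y Hy ->; split.
    * exists (x0 * y). by rewrite rmorphM Hy Hx0 mulrBl.
    * by rewrite /fixed_ring rmorphM Ha Hy.
- move=> B phi _ _ [g Hg Hpl] a b c Pa a0 Pb b0 [_ _ Hc] Hcf.
  have [a' _ Ea] := (Hpl a).1 Pa. have [b' _ Eb] := (Hpl b).1 Pb.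
  have [z Ez] := Hc g (ex_intro _ a' Ea) (ex_intro _ b' Eb).
  apply/Hpl. exists z => //.
  have g0 : g != 0 by apply: contraNneq a0 => g0; rewrite Ea g0 mul0r.
  rewrite /fixed_ring. apply: (mulfI g0).
  by rewrite -{1}Hg -rmorphM -Ez Hcf.
Qed.
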